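(* Let $d,n,k\ge 1$ be integers and let $\mathcal{L}_{\leq d}(n,k)$ be the set of lonesum $0$-$1$ matrices with $n$ rows and $k$ columns having no all-zero row and no all-zero column, in which at most $d$ columns are of the same type and at most $d$ rows are of the same type. Then $\mathcal{L}_{\leq d}(n,k)$ is non-empty if and only if $\lceil n/d\rceil\leq k\leq nd$; i.e. $|\mathcal{L}_{\leq d}(n,k)|=0$ if $k<\lceil n/d\rceil$ or $k>nd$.
   Context: A $0$-$1$ matrix is lonesum if it is uniquely determined by its row sum vector and column sum vector; equivalently, it contains no $2\times 2$ submatrix equal to $\begin{pmatrix}1&0\\0&1\end{pmatrix}$ or $\begin{pmatrix}0&1\\1&0\end{pmatrix}$. Two rows (resp. columns) are of the same type iff they are identical vectors. *)

(* Defs.v *)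
From mathcomp Require Import all_boot all_order all_algebra.
Set Implicit Arguments. Unset Strict Implicit. Unset Printing Implicit Defensive.

Definition rowsum n k (A : 'M[bool]_(n, k)) (i : 'I_n) : nat :=
  \sum_(j < k) nat_of_bool (A i j).
Definition colsum n k (A : 'M[bool]_(n, k)) (j : 'I_k) : nat :=
  \sum_(i < n) nat_of_bool (A i j).

Definition lonesum n k (A : 'M[bool]_(n, k)) : Prop :=
  forall B : 'M[bool]_(n, k),
    (forall i, rowsum B i = rowsum A i) ->
    (forall j, colsum B j = colsum A j) -> B = A.

Definition no_zero_row n k (A : 'M[bool]_(n, k)) : Prop :=
  forall i : 'I_n, exists j : 'I_k, A i j.
Definition no_zero_col n k (A : 'M[bool]_(n, k)) : Prop :=
  forall j : 'I_k, exists i : 'I_n, A i j.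

Definition rows_at_most n k (d : nat) (A : 'M[bool]_(n, k)) : Prop :=
  forall i : 'I_n, #|[set i' : 'I_n | row i' A == row i A]| <= d.
Definition cols_at_most n k (d : nat) (A : 'M[bool]_(n, k)) : Prop :=
  forall j : 'I_k, #|[set j' : 'I_k | col j' A == col j A]| <= d.

Definition in_L d n k (A : 'M[bool]_(n, k)) : Prop :=
  [/\ lonesum A, no_zero_row A, no_zero_col A, rows_at_most d A & cols_at_most d A].

(* Main.v *)
Require Import Defs.
From mathcomp Require Import all_boot all_order all_algebra all_fingroup.
From mathcomp Require Import zify.
Import GRing.Theory Num.Theory.

Lemma thr_lonesum n k (x : 'I_n -> nat) (y : 'I_k -> nat) (A : 'M[bool]_(n, k)) :
  (forall i j, A i j = (y j < x i)) -> lonesum A.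
Proof.
move=> HA B Hr Hc; apply/matrixP => i j.
pose D i j : int := ((nat_of_bool (A i j))%:Z - (nat_of_bool (B i j))%:Z)%R.
pose t i j : int := (D i j * ((2 * x i)%:Z - (2 * y j).+1%:Z))%R.
have PS := big_morph Posz PoszD (erefl (Posz 0)).
have t0 : forall i j, (0 <= t i j)%R.
  move=> a b; rewrite /t /D HA.
  case: (B a b); case: ltnP => /= h; lia.
have rowD : forall a, (\sum_b D a b = 0)%R.
  move=> a; rewrite /D sumrB -!PS; have := Hr a; rewrite /rowsum => ->; by rewrite subrr.
have colD : forall b, (\sum_a D a b = 0)%R.
  move=> b; rewrite /D sumrB -!PS; have := Hc b; rewrite /colsum => ->; by rewrite subrr.
have S0 : (\sum_a \sum_b t a b = 0)%R.
  rewrite /t.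
  under eq_bigr => a _ do under eq_bigr => b _ do rewrite mulrBr.
  under eq_bigr => a _ do rewrite sumrB.
  rewrite sumrB.
  under eq_bigr => a _ do rewrite -mulr_suml rowD mul0r.
  rewrite exchange_big /=.
  under [X in (_ - X)%R]eq_bigr => b _ do rewrite -mulr_suml colD mul0r.
  by rewrite !big1 // subrr.
have Si := psumr_eq0P (fun a _ => sumr_ge0 _ (fun b _ => t0 a b)) S0 (i := i) isT.
have := psumr_eq0P (fun b _ => t0 i b) Si (i := j) isT.
rewrite /t /D HA; case: (B i j); case: ltnP => /= h; lia.
Qed.
Lemma fiber_mod N m d : 0 < m -> N <= m * d ->
  forall t, #|[set i : 'I_N | i %% m == t]| <= d.
Proof.
move=> m0 hN t; case: d hN => [|d] hN.
  apply: leq_trans (max_card _) _; rewrite card_ord; lia.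
pose h (i : 'I_N) : 'I_d.+1 := inord (i %/ m).
rewrite -(card_in_imset (f := h)); first by apply: leq_trans (max_card _) _; rewrite card_ord.
move=> a b; rewrite !inE => /eqP ha /eqP hb /(congr1 (@nat_of_ord _)).
have lt_d : forall c : 'I_N, c %/ m < d.+1.
  move=> c; rewrite ltn_divLR //; have := ltn_ord c; lia.
rewrite /h !inordK // => e; apply: val_inj => /=.
by rewrite (divn_eq a m) (divn_eq b m) e ha hb.
Qed.

Lemma build_ok d n k : 0 < d -> 0 < n -> 0 < k -> n <= minn n k * d -> k <= minn n k * d ->
  exists A : 'M[bool]_(n, k), in_L d A.
Proof.
move=> hd hn hk hnm hkm; set m := minn n k.
have m0 : 0 < m by rewrite /m; lia.
have mn : m <= n by rewrite /m; lia.
have mk : m <= k by rewrite /m; lia.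
pose A : 'M[bool]_(n, k) := (\matrix_(i < n, j < k) ((j %% m)%N < (i %% m)%N.+1)%N)%R.
exists A; split.
- by apply: (@thr_lonesum _ _ (fun i : 'I_n => (i %% m).+1) (fun j : 'I_k => j %% m)) => i j; rewrite mxE.
- move=> i; exists (Ordinal hk); by rewrite mxE /= mod0n.
- move=> j; have hi : m.-1 < n by lia.
  exists (Ordinal hi); rewrite mxE /= (@modn_small m.-1); last by lia.
  have := ltn_pmod j m0; lia.
- move=> i; apply: (leq_trans _ (@fiber_mod _ _ _ m0 hnm (i %% m))).
  apply: subset_leq_card; apply/subsetP => i'; rewrite !inE => /eqP e.
  apply/negPn/negP => ne.
  have [a [b [ha hb lt_ab]]] : exists a b : 'I_n, [/\ (a == i) || (a == i'), (b == i) || (b == i') & a %% m < b %% m].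
    case: (ltngtP (i %% m) (i' %% m)) => h.
    + by exists i, i'; rewrite !eqxx orbT.
    + by exists i', i; rewrite !eqxx orbT.
    + by rewrite h eqxx in ne.
  have hj : b %% m < k by have := ltn_pmod b m0; lia.
  have ra : row a A = row b A.
    by move: ha hb; do 2 case/orP => /eqP ->.
  have := congr1 (fun r : 'rV[bool]_k => r ord0 (Ordinal hj)) ra; rewrite !mxE /= modn_small; last by have := ltn_pmod b m0; lia.
  rewrite ltnSn ltnS leqNgt lt_ab; done.
- move=> j; apply: (leq_trans _ (@fiber_mod _ _ _ m0 hkm (j %% m))).
  apply: subset_leq_card; apply/subsetP => j'; rewrite !inE => /eqP e.
  apply/negPn/negP => ne.
  have [a [b [ha hb lt_ab]]] : exists a b : 'I_k, [/\ (a == j) || (a == j'), (b == j) || (b == j') & a %% m < b %% m].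
    case: (ltngtP (j %% m) (j' %% m)) => h.
    + by exists j, j'; rewrite !eqxx orbT.
    + by exists j', j; rewrite !eqxx orbT.
    + by rewrite h eqxx in ne.
  have hi : a %% m < n by have := ltn_pmod a m0; lia.
  have ra : col a A = col b A.
    by move: ha hb; do 2 case/orP => /eqP ->.
  have := congr1 (fun r : 'cV[bool]_n => r (Ordinal hi) ord0) ra; rewrite !mxE /= modn_mod.
  rewrite ltnSn ltnS leqNgt lt_ab; done.
Qed.

Lemma lonesum_row_eq n k (A : 'M[bool]_(n, k)) i i' :
  lonesum A -> rowsum A i = rowsum A i' -> row i A = row i' A.
Proof.
move=> hL hs.
pose B : 'M[bool]_(n, k) := (\matrix_(a < n, b < k) A (tperm i i' a) b)%R.
have hB : B = A.
  apply: hL.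
  - move=> a; rewrite /rowsum; under eq_bigr => b _ do rewrite mxE.
    by case: tpermP => [->|->|_ _].
  - move=> b; rewrite /colsum; under eq_bigr => a _ do rewrite mxE.
    by rewrite [RHS](reindex_inj (@perm_inj _ (tperm i i'))).
by apply/rowP => b; rewrite !mxE; have := congr1 (fun M : 'M[bool]_(n, k) => M i b) hB; rewrite /= mxE tpermL => ->.
Qed.

Lemma count_fib (T T' : finType) (h : T -> T') d :
  (forall s, #|[set t | h t == s]| <= d) -> #|T| <= #|T'| * d.
Proof.
move=> hf; rewrite -sum1_card (partition_big h predT) //=.
rewrite -sum_nat_const; apply: leq_sum => s _.
apply: leq_trans (hf s); rewrite sum1_card; apply: subset_leq_card.
by apply/subsetP => t; rewrite !inE.
Qed.

Lemma rows_bound d n k (A : 'M[bool]_(n, k)) : 0 < k ->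
  lonesum A -> no_zero_row A -> rows_at_most d A -> n <= k * d.
Proof.
case: k A => [|k] A // _ hL hz hr.
have bnd : forall i, 0 < rowsum A i <= k.+1.
  move=> i; apply/andP; split.
    by have [j hj] := hz i; rewrite /rowsum (bigD1 j) //= hj.
  apply: (@leq_trans (\sum_(j < k.+1) 1)).
    by rewrite /rowsum; apply: leq_sum => j _; case: (A i j).
  by rewrite sum1_card card_ord.
pose h (i : 'I_n) : 'I_k.+1 := inord (rowsum A i).-1.
rewrite -{1}(card_ord n) -(card_ord k.+1); apply: (@count_fib _ _ h) => s.
case: (pickP [pred t | h t == s]) => [i0 /= /eqP <-| none]; last first.
  rewrite (_ : [set t | h t == s] = set0) ?cards0 //; apply/setP => t; rewrite !inE; exact: none.
apply: leq_trans (hr i0); apply: subset_leq_card; apply/subsetP => i; rewrite !inE => /eqP e.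
apply/eqP; apply: lonesum_row_eq => //.
move: e => /(congr1 (@nat_of_ord _)); rewrite /h !inordK; try (have := bnd i; have := bnd i0; lia).
Qed.

Lemma tr_lonesum n k (A : 'M[bool]_(n, k)) : lonesum A -> lonesum A^T%R.
Proof.
move=> hL B hr hc; rewrite -[B]trmxK; congr (_^T)%R; apply: hL.
- move=> i; rewrite /rowsum; under eq_bigr do rewrite mxE.
  have := hc i; rewrite /colsum => ->; apply: eq_bigr => j _; by rewrite mxE.
- move=> j; rewrite /colsum; under eq_bigr do rewrite mxE.
  have := hr j; rewrite /rowsum => ->; apply: eq_bigr => i _; by rewrite mxE.
Qed.

Theorem mainTheorem5 (d n k : nat) (hd : 1 <= d) (hn : 1 <= n) (hk : 1 <= k) :
  (exists A : 'M[bool]_(n, k), in_L d A) <->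
  ((n + d - 1) %/ d <= k /\ k <= n * d).
Proof.
split.
- move=> [A [hL hzr hzc hr hc]].
  have h1 := @rows_bound _ _ _ A hk hL hzr hr.
  have h2 : k <= n * d.
    apply: (@rows_bound d k n A^T%R hn (@tr_lonesum _ _ A hL)).
    + by move=> j; have [i hi] := hzc j; exists i; rewrite mxE.
    + move=> j; apply: leq_trans (hc j); rewrite leq_eqVlt; apply/orP; left; apply/eqP.
      apply: eq_card => j'; rewrite !inE -!tr_col; apply/eqP/eqP => [e|->] //.
      by rewrite -[col j' A]trmxK e trmxK.
  split=> //; rewrite -ltnS ltn_divLR //; nia.
- move=> [h1 h2]; move: h1; rewrite -ltnS ltn_divLR // => h1.
  apply: build_ok => //; rewrite /minn; case: ltnP => h; nia.
Qed.
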